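(* Let $k\geq2$ be even. If the word $a_k$ followed by $a_k$ overlap at shift $s$ with $0<s<\ell_k$, then $s\geq(N_k-1)\ell_{k-1}$; that is, two copies of $a_k$ can only overlap with the initial segment $a_{k-1}$ of one copy overlapping the terminal segment $a_{k-1}$ of the other.
   Context: Alphabet $\{0,1,2\}$. Let $(N_k)_{k\geq1}$ be integers with $N_k\geq4$, $\ell_0=2$, $\ell_k=N_k\ell_{k-1}$. Words: $a_0=01$; for odd $k\geq1$, $a_k=(a_{k-1})^{N_k}$ (concatenation of $N_k$ copies); for even $k\geq2$, $a_k=a_{k-1}1^{(N_k-2)\ell_{k-1}}a_{k-1}$. Two words $u,v$ of the same length $\ell$ overlap with $u$ followed by $v$ at shift $s$ ($0<s<\ell$) if the terminal segment of length $\ell-s$ of $u$ equals the initial segment of length $\ell-s$ of $v$. *)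

(* Defs.v *)
From mathcomp Require Import all_boot.
Set Implicit Arguments. Unset Strict Implicit. Unset Printing Implicit Defensive.

(* Words over the alphabet {0,1,2} are represented as sequences of naturals.
   N k is the parameter N_k (only values for k >= 1 are used). *)

Fixpoint ell (N : nat -> nat) (k : nat) : nat :=
  match k with
  | 0 => 2
  | k'.+1 => N k'.+1 * ell N k'
  end.

Definition wpow (w : seq nat) (n : nat) : seq nat := flatten (nseq n w).

Fixpoint aw (N : nat -> nat) (k : nat) : seq nat :=
  match k with
  | 0 => [:: 0; 1]
  | k'.+1 =>
      if odd k'.+1 then wpow (aw N k') (N k'.+1)
      else aw N k' ++ nseq ((N k'.+1 - 2) * ell N k') 1 ++ aw N k'
  end.

Definition overlap (u v : seq nat) (s : nat) : Prop :=
  size u = size v /\ 0 < s < size u /\ drop s u = take (size u - s) v.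

(* Main.v *)
Require Import Defs.
From mathcomp Require Import all_boot.
From mathcomp Require Import zify.

Lemma wpowS (w : seq nat) n : wpow w n.+1 = w ++ wpow w n.
Proof. by []. Qed.

Lemma wpowSr (w : seq nat) n : wpow w n.+1 = wpow w n ++ w.
Proof.
elim: n => [|n IH]; first by rewrite /wpow /= cats0.
transitivity (w ++ wpow w n.+1); first by [].
by rewrite {1}IH catA.
Qed.

Lemma size_wpow (w : seq nat) n : size (wpow w n) = n * size w.
Proof. elim: n => [|n IH] //; by rewrite wpowS size_cat IH mulSn. Qed.

Section S.
Variable N : nat -> nat.
Hypothesis hN : forall j, 1 <= j -> 4 <= N j.

Lemma aw_start j : exists t, aw N j = [:: 0, 1 & t].
Proof.
elim: j => [|j [t IH]]; first by exists [::].
rewrite /=; case: ifP => _.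
  have := hN j.+1 isT; case: (N j.+1) => [|n] // _.
  by rewrite wpowS IH; eexists.
by rewrite IH; eexists.
Qed.

Lemma aw_end j : exists t, aw N j = t ++ [:: 0; 1].
Proof.
elim: j => [|j [t IH]]; first by exists [::].
rewrite /=; case: ifP => _.
  have := hN j.+1 isT; case: (N j.+1) => [|n] // _.
  by rewrite wpowSr IH catA; eexists.
by rewrite IH !catA; eexists.
Qed.

Lemma size_aw j : size (aw N j) = ell N j.
Proof.
elim: j => [|j IH] //=; case: ifP => _.
  by rewrite size_wpow IH.
have := hN j.+1 isT.
rewrite !size_cat size_nseq IH => h.
have -> : N j.+1 = (N j.+1 - 2) + 2 by lia.
rewrite addnK mulnDl. lia.
Qed.
End S.

Theorem lemma3p3 (N : nat -> nat) (hN : forall j, 1 <= j -> 4 <= N j)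
  (k : nat) (hk2 : 2 <= k) (hkev : ~~ odd k) (s : nat) :
  0 < s < ell N k -> overlap (aw N k) (aw N k) s ->
  (N k - 1) * ell N k.-1 <= s.
Proof.
case: k hk2 hkev => [|k] // hk2 hkev /andP [s0 sl] [_ [_ hov]].
have hM := hN k.+1 isT.
have key : forall j, j < size (aw N k.+1) - s ->
    nth 0 (aw N k.+1) (s + j) = nth 0 (aw N k.+1) j.
  move=> j hj.
  by rewrite -nth_drop hov nth_take.
have hsz := @size_aw N hN k.+1.
have hL := @size_aw N hN k.
have eqaw : aw N k.+1 = aw N k ++ nseq ((N k.+1 - 2) * ell N k) 1 ++ aw N k.
  have ok : odd k by move: hkev; rewrite /= negbK.
  by rewrite /= ok.
have eql : ell N k.+1 = N k.+1 * ell N k by [].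
move: key hsz; rewrite eqaw eql.
rewrite eql in sl; change (N (k.+1).-1) with (N k).
set A := aw N k in hL *; set L := ell N k in hL sl *; set M := N k.+1 in hM sl *.
move=> key hsz.
have Lge2 : 2 <= L.
  case: (@aw_end N hN k) => t ht. rewrite -hL /A ht size_cat /=. lia.
have blk : forall i, L <= i < L + (M - 2) * L ->
    nth 0 (A ++ nseq ((M - 2) * L) 1 ++ A) i = 1.
  move=> i /andP [h1 h2].
  rewrite nth_cat hL ltnNge h1 /= nth_cat size_nseq.
  have -> : i - L < (M - 2) * L by lia.
  by rewrite nth_nseq; have -> : i - L < (M - 2) * L by lia.
have lo : forall i, i < L -> nth 0 (A ++ nseq ((M - 2) * L) 1 ++ A) i = nth 0 A i.
  by move=> i hi; rewrite nth_cat hL hi.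
case: (@aw_start N hN k) => t ht.
case: (@aw_end N hN k) => t' ht'.
have A0 : nth 0 A 0 = 0 by rewrite /A ht.
have A1 : nth 0 A 1 = 1 by rewrite /A ht.
have AL : nth 0 A (L - 2) = 0.
  have : size A = L by [].
  rewrite /A ht' size_cat /= => e.
  rewrite nth_cat; have -> : L - 2 < size t' = false by lia.
  by have -> : L - 2 - size t' = 0 by lia.
have mL : M * L = L + (M - 2) * L + L.
  have -> : M = (M - 2) + 2 by lia. rewrite addnK mulnDl. lia.
rewrite leqNgt; apply/negP => hs.
have eM1 : (M - 1) * L = L + (M - 2) * L.
  have -> : M - 1 = (M - 2).+1 by lia. by rewrite mulSn.
have hbig : 2 * L <= (M - 2) * L by apply: leq_mul; lia.
case: (ltnP s L) => hsL.
- case: (ltnP s 2) => hs2.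
  + have s1 : s = 1 by lia.
    have h := key 0 (ltac:(rewrite hsz; lia)).
    rewrite addn0 s1 (lo 1) ?(lo 0) in h; lia.
  + have h := key (L - 2) (ltac:(rewrite hsz; lia)).
    rewrite (lo (L - 2)) in h; last by lia.
    rewrite AL blk in h; first by [].
    apply/andP; split; lia.
- have h := key 0 (ltac:(rewrite hsz; lia)).
  rewrite addn0 (lo 0) in h; last by lia.
  rewrite A0 blk in h; first by [].
  apply/andP; split; lia.
Qed.
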